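(* Let $\mathcal{X}^c=(X^c,\tau^c,\Phi^c,V^c)$ be the canonical model for $APAL_{int}$. Then for every $\varphi\in\mathcal{L}_{APAL_{int}}$ and every $x\in X^c$: $\varphi\in x$ iff $\mathcal{X}^c,(x,\theta^* )\models\varphi$.
   Context: Fix a countable set $\mathit{Prop}$ and a finite non-empty set $\mathcal{A}$ of agents. $\mathcal{L}_{APAL_{int}}$: $\varphi ::= p \mid \neg\varphi \mid \varphi\wedge\varphi \mid K_i\varphi \mid \mathrm{int}(\varphi)\mid [\varphi]\varphi\mid\Box\varphi$; $\mathcal{L}_{PAL_{int}}$ its $\Box$-free fragment; $\bot:=p\wedge\neg p$. Necessity forms: $\xi(\sharp)::=\sharp\mid\varphi\to\xi(\sharp)\mid K_i\xi(\sharp)\mid\mathrm{int}(\xi(\sharp))\mid[\varphi]\xi(\sharp)$. $APAL_{int}$: axioms: propositional tautologies; $K_i(\varphi\to\psi)\to(K_i\varphi\to K_i\psi)$; $K_i\varphi\to\varphi$; $K_i\varphi\to K_iK_i\varphi$; $\neg K_i\varphi\to K_i\neg K_i\varphi$; $\mathrm{int}(\varphi\to\psi)\to(\mathrm{int}(\varphi)\to\mathrm{int}(\psi))$; $\mathrm{int}(\varphi)\to\varphi$; $\mathrm{int}(\varphi)\to\mathrm{int}(\mathrm{int}(\varphi))$; $K_i\varphi\to\mathrm{int}(\varphi)$; $[\varphi]p\leftrightarrow(\mathrm{int}(\varphi)\to p)$; $[\varphi]\neg\psi\leftrightarrow(\mathrm{int}(\varphi)\to\neg[\varphi]\psi)$;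 $[\varphi](\psi\wedge\chi)\leftrightarrow[\varphi]\psi\wedge[\varphi]\chi$; $[\varphi]\mathrm{int}(\psi)\leftrightarrow(\mathrm{int}(\varphi)\to\mathrm{int}([\varphi]\psi))$; $[\varphi]K_i\psi\leftrightarrow(\mathrm{int}(\varphi)\to K_i[\varphi]\psi)$; $[\varphi][\psi]\chi\leftrightarrow[\neg[\varphi]\neg\mathrm{int}(\psi)]\chi$; $\Box\varphi\to[\chi]\varphi$ for $\chi\in\mathcal{L}_{PAL_{int}}$. Rules: modus ponens; from $\varphi$ infer $K_i\varphi$; from $\varphi$ infer $\mathrm{int}(\varphi)$; from $\varphi$ infer $[\psi]\varphi$; (DR5) from $\xi([\psi]\chi)$ for all $\psi\in\mathcal{L}_{PAL_{int}}$ infer $\xi(\Box\chi)$. A theory is a set $x$ of formulas containing all theorems of $APAL_{int}$ and closed under modus ponens and (DR5); it is consistent iff $\bot\notin x$; a set of formulas is consistent iff it is contained in a consistent theory; a theory is maximally consistent iff it is consistent and every set properly containing it is inconsistent. Canonical model: $X^c$ is the set of maximally consistent theories; $x\sim_i y$ iff for all $\varphi$, $K_i\varphi\in x\Leftrightarrow K_i\varphi\in y$; $[x]_i$ the $\sim_i$-class of $x$; $\widehat{\varphi}=\{y\in X^c\mid\varphi\in y\}$; $\tau^c$ is generated by the subbase $\{[x]_i\cap\widehat{\mathrm{int}(\varphi)}\mid x\in X^c,\varphi\in\mathcal{L}_{APAL_{int}},i\in\mathcal{A}\}$; $x\in V^c(p)$ iff $p\in x$; $\theta^*(x)(i)=[x]_i$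 (total), $\Phi^c=\{\theta^*|_U\mid U\in\tau^c\}$ with $\theta^*|_U$ of domain $U$ and values $[x]_i\cap U$. Semantics at $(x,\theta)$, $x\in Dom(\theta)$: $p$ iff $x\in V^c(p)$; Booleans usual; $K_i\varphi$ iff $\varphi$ holds at $(y,\theta)$ for all $y\in\theta(x)(i)$; $\mathrm{int}(\varphi)$ iff $x\in\mathrm{Int}([\![\varphi]\!]^\theta)$ with $[\![\varphi]\!]^\theta=\{y\in Dom(\theta)\mid(y,\theta)\models\varphi\}$; $[\varphi]\psi$ iff $(x,\theta)\models\mathrm{int}(\varphi)$ implies $(x,\theta^\varphi)\models\psi$, where $\theta^\varphi=\theta|_{\mathrm{Int}([\![\varphi]\!]^\theta)}$ (domain $Dom(\theta)\cap\mathrm{Int}([\![\varphi]\!]^\theta)$, values intersected with that set); $\Box\varphi$ iff $(x,\theta)\models[\psi]\varphi$ for all $\psi\in\mathcal{L}_{PAL_{int}}$. *)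

(* Defs.v *)
From Stdlib Require Import List FunctionalExtensionality.
Import ListNotations.
Set Implicit Arguments.

Section APALint.

Variable P : Type.
Variable Ag : Type.

Inductive form : Type :=
| Var  : P -> form
| Neg  : form -> form
| And  : form -> form -> form
| K    : Ag -> form -> form
| FInt : form -> form
| Ann  : form -> form -> form
| Box  : form -> form.

Definition Imp (a b : form) : form := Neg (And a (Neg b)).
Definition Iff (a b : form) : form := And (Imp a b) (Imp b a).
Definition Bot (p : P) : form := And (Var p) (Neg (Var p)).

Fixpoint isPAL (f : form) : Prop :=
  match f with
  | Var _ => True
  | Neg a => isPAL a
  | And a b => isPAL a /\ isPAL b
  | K _ a => isPAL a
  | FInt a => isPAL a
  | Ann a b => isPAL a /\ isPAL b
  | Box _ => False
  end.

Inductive nform : Type :=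
| Hole : nform
| NImp : form -> nform -> nform
| NK   : Ag -> nform -> nform
| NInt : nform -> nform
| NAnn : form -> nform -> nform.

Fixpoint fill (xi : nform) (c : form) : form :=
  match xi with
  | Hole => c
  | NImp a xi' => Imp a (fill xi' c)
  | NK i xi' => K i (fill xi' c)
  | NInt xi' => FInt (fill xi' c)
  | NAnn a xi' => Ann a (fill xi' c)
  end.

(** Propositional tautologies: valid under every Boolean valuation of the
    non-Boolean (atomic for propositional logic) subformulas. *)
Fixpoint beval (v : form -> bool) (f : form) : bool :=
  match f with
  | Neg a => negb (beval v a)
  | And a b => andb (beval v a) (beval v b)
  | _ => v f
  end.
Definition tautology (f : form) : Prop := forall v, beval v f = true.

Inductive Thm : form -> Prop :=
| Ax_taut : forall a, tautology a -> Thm a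
| Ax_KK   : forall i a b, Thm (Imp (K i (Imp a b)) (Imp (K i a) (K i b)))
| Ax_KT   : forall i a, Thm (Imp (K i a) a)
| Ax_K4   : forall i a, Thm (Imp (K i a) (K i (K i a)))
| Ax_K5   : forall i a, Thm (Imp (Neg (K i a)) (K i (Neg (K i a))))
| Ax_IntK : forall a b, Thm (Imp (FInt (Imp a b)) (Imp (FInt a) (FInt b)))
| Ax_IntT : forall a, Thm (Imp (FInt a) a)
| Ax_Int4 : forall a, Thm (Imp (FInt a) (FInt (FInt a)))
| Ax_KInt : forall i a, Thm (Imp (K i a) (FInt a))
| Ax_Rp   : forall a p, Thm (Iff (Ann a (Var p)) (Imp (FInt a) (Var p)))
| Ax_Rneg : forall a b, Thm (Iff (Ann a (Neg b)) (Imp (FInt a) (Neg (Ann a b))))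
| Ax_Rand : forall a b c, Thm (Iff (Ann a (And b c)) (And (Ann a b) (Ann a c)))
| Ax_Rint : forall a b, Thm (Iff (Ann a (FInt b)) (Imp (FInt a) (FInt (Ann a b))))
| Ax_RK   : forall a i b, Thm (Iff (Ann a (K i b)) (Imp (FInt a) (K i (Ann a b))))
| Ax_Rann : forall a b c,
    Thm (Iff (Ann a (Ann b c)) (Ann (Neg (Ann a (Neg (FInt b)))) c))
| Ax_Box  : forall a c, isPAL c -> Thm (Imp (Box a) (Ann c a))
| R_MP    : forall a b, Thm (Imp a b) -> Thm a -> Thm b
| R_NecK  : forall i a, Thm a -> Thm (K i a)
| R_NecInt: forall a, Thm a -> Thm (FInt a)
| R_NecAnn: forall b a, Thm a -> Thm (Ann b a)
| R_DR5   : forall xi c,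
    (forall psi, isPAL psi -> Thm (fill xi (Ann psi c))) -> Thm (fill xi (Box c)).

Definition fset := form -> Prop.

Definition isTheory (x : fset) : Prop :=
  (forall a, Thm a -> x a) /\
  (forall a b, x (Imp a b) -> x a -> x b) /\
  (forall xi c, (forall psi, isPAL psi -> x (fill xi (Ann psi c))) ->
                x (fill xi (Box c))).

Variable p0 : P.

Definition consistentTheory (x : fset) : Prop := isTheory x /\ ~ x (Bot p0).

Definition consistentSet (S : fset) : Prop :=
  exists x, consistentTheory x /\ (forall a, S a -> x a).

Definition maxConsistent (x : fset) : Prop :=
  consistentTheory x /\
  forall S : fset, (forall a, x a -> S a) -> (exists a, S a /\ ~ x a) ->
                   ~ consistentSet S.

Definition Xc : Type := { x : fset | maxConsistent x }.

Definition mem (x : Xc) (a : form) : Prop := proj1_sig x a.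

Definition simc (i : Ag) (x y : Xc) : Prop :=
  forall a, mem x (K i a) <-> mem y (K i a).

Definition cls (i : Ag) (x : Xc) : Xc -> Prop := fun y => simc i x y.

Definition subbase (s : Xc * form * Ag) : Xc -> Prop :=
  let '(x, a, i) := s in fun y => cls i x y /\ mem y (FInt a).

(** open sets of tau^c: the topology generated by the subbase
    (unions of finite intersections of subbase elements) *)
Definition isOpen (U : Xc -> Prop) : Prop :=
  forall y, U y -> exists l : list (Xc * form * Ag),
    (forall s, In s l -> subbase s y) /\
    (forall z, (forall s, In s l -> subbase s z) -> U z).

Definition interior (S : Xc -> Prop) : Xc -> Prop :=
  fun y => exists U, isOpen U /\ U y /\ (forall z, U z -> S z).

(** An element theta^*|_U of Phi^c (U open) is represented by its domain U:
    Dom = U, theta(x)(i) = [x]_i ∩ U.  Updating by phi gives the domain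
    U ∩ Int([[phi]]).  [sat a U x] means (x, theta^*|_U) |= a.
    [sat0] is the same clause-by-clause definition without the Box clause;
    it is only used on Box-free formulas (inside the Box clause, which
    quantifies over PAL_int formulas psi). *)
Fixpoint sat0 (f : form) : (Xc -> Prop) -> Xc -> Prop :=
  match f with
  | Var p => fun U x => mem x (Var p)
  | Neg a => fun U x => ~ sat0 a U x
  | And a b => fun U x => sat0 a U x /\ sat0 b U x
  | K i a => fun U x => forall y, cls i x y /\ U y -> sat0 a U y
  | FInt a => fun U x => interior (fun y => U y /\ sat0 a U y) x
  | Ann a b => fun U x =>
      interior (fun y => U y /\ sat0 a U y) x ->
      sat0 b (fun y => U y /\ interior (fun z => U z /\ sat0 a U z) y) x
  | Box _ => fun _ _ => False
  end.

Fixpoint sat (f : form) : (Xc -> Prop) -> Xc -> Prop :=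
  match f with
  | Var p => fun U x => mem x (Var p)
  | Neg a => fun U x => ~ sat a U x
  | And a b => fun U x => sat a U x /\ sat b U x
  | K i a => fun U x => forall y, cls i x y /\ U y -> sat a U y
  | FInt a => fun U x => interior (fun y => U y /\ sat a U y) x
  | Ann a b => fun U x =>
      interior (fun y => U y /\ sat a U y) x ->
      sat b (fun y => U y /\ interior (fun z => U z /\ sat a U z) y) x
  | Box a => fun U x =>
      forall psi, isPAL psi ->
      (interior (fun y => U y /\ sat0 psi U y) x ->
       sat a (fun y => U y /\ interior (fun z => U z /\ sat0 psi U z) y) x)
  end.

Lemma sat0_sat_PAL : forall f, isPAL f -> forall U, sat0 f U = sat f U.
Proof.
  induction f; simpl; intros H U; try reflexivity.
  - rewrite (IHf H U); reflexivity.
  - destruct H as [H1 H2]; rewrite (IHf1 H1 U), (IHf2 H2 U); reflexivity.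
  - apply functional_extensionality; intro x.
    assert (E : forall V, sat0 f V = sat f V) by (intro; apply IHf; exact H).
    rewrite (E U); reflexivity.
  - rewrite (IHf H U); reflexivity.
  - destruct H as [H1 H2].
    apply functional_extensionality; intro x.
    rewrite (IHf1 H1 U).
    rewrite (IHf2 H2); reflexivity.
  - contradiction.
Qed.

End APALint.

(* Main.v *)
Require Import Defs.
From Stdlib Require Import List Classical ClassicalEpsilon FunctionalExtensionality PropExtensionality Lia Cantor.
Import ListNotations.

Arguments Var {P Ag}. Arguments FInt {P Ag}. Arguments NInt {P Ag}. Arguments Hole {P Ag}. Arguments Bot {P Ag}.

Ltac tautac := apply Ax_taut; let v := fresh "v" in intro v; unfold Imp, Iff, Bot; simpl;
  repeat (first [destruct (beval v _) | destruct (v _)]); reflexivity.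



Lemma thm_in {P Ag} (x : fset P Ag) a : isTheory x -> Thm a -> x a.
Proof. intros [H _] h; auto. Qed.
Lemma mp_in {P Ag} (x : fset P Ag) a b : isTheory x -> x (Imp a b) -> x a -> x b.
Proof. intros [_ [H _]] h1 h2; eauto. Qed.
Lemma taut_in {P Ag} (x : fset P Ag) a b : isTheory x -> Thm (Imp a b) -> x a -> x b.
Proof. intros T h1 h2. eapply mp_in; [exact T|apply thm_in; eauto|exact h2]. Qed.
Lemma taut2_in {P Ag} (x : fset P Ag) a b c : isTheory x -> Thm (Imp a (Imp b c)) -> x a -> x b -> x c.
Proof. intros T h1 h2 h3. eapply mp_in; [exact T| |exact h3]. eapply taut_in; eauto. Qed.

Definition plus {P Ag} (x : fset P Ag) (a : form P Ag) : fset P Ag := fun b => x (Imp a b).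

Lemma plus_theory {P Ag} (x : fset P Ag) a : isTheory x -> isTheory (plus x a).
Proof.
  intros T. unfold plus. split; [|split].
  - intros b hb. apply thm_in; auto. eapply R_MP; [|exact hb]. tautac.
  - intros b c h1 h2. apply (taut2_in x (Imp a (Imp b c)) (Imp a b)); auto. tautac.
  - intros xi c H. destruct T as [_ [_ D]]. apply (D (NImp a xi) c). exact H.
Qed.

Lemma plus_incl {P Ag} (x : fset P Ag) a b : isTheory x -> x b -> plus x a b.
Proof. intros T h. unfold plus. eapply taut_in; eauto. tautac. Qed.
Lemma plus_self {P Ag} (x : fset P Ag) a : isTheory x -> plus x a a.
Proof. intros T. unfold plus. apply thm_in; auto. tautac. Qed.

Lemma mc_theory {P Ag} {p0 : P} {x : fset P Ag} : maxConsistent p0 x -> isTheory x.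
Proof. intros [[T _] _]; exact T. Qed.
Lemma mc_cons {P Ag} {p0 : P} {x : fset P Ag} : maxConsistent p0 x -> ~ x (Bot p0).
Proof. intros [[_ C] _]; exact C. Qed.

Lemma mc_neg {P Ag} {p0 : P} {x : fset P Ag} a : maxConsistent p0 x -> (x (Neg a) <-> ~ x a).
Proof.
  intros M. pose proof (mc_theory M) as T. split.
  - intros h1 h2. apply (mc_cons M). apply (taut2_in x (Neg a) a); auto. tautac.
  - intros h. destruct (classic (plus x a (Bot p0))) as [hb|hb].
    + unfold plus in hb. apply (taut_in x (Imp a (Bot p0))); auto. tautac.
    + exfalso. destruct M as [_ M]. apply (M (plus x a)).
      * intros b hb'. apply plus_incl; auto.
      * exists a. split; auto. apply plus_self; auto.
      * exists (plus x a). split; [split; [apply plus_theory; auto|exact hb]|auto].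
Qed.

Lemma mc_and {P Ag} {p0 : P} {x : fset P Ag} a b : maxConsistent p0 x -> (x (And a b) <-> x a /\ x b).
Proof.
  intros M. pose proof (mc_theory M) as T. split.
  - intros h; split; [apply (taut_in x (And a b))|apply (taut_in x (And a b))]; auto; tautac.
  - intros [h1 h2]. apply (taut2_in x a b); auto. tautac.
Qed.

Lemma mc_imp {P Ag} {p0 : P} {x : fset P Ag} a b : maxConsistent p0 x -> (x (Imp a b) <-> (x a -> x b)).
Proof.
  intros M. pose proof (mc_theory M) as T. split.
  - intros h1 h2. eapply mp_in; eauto.
  - intros h. destruct (classic (x a)) as [ha|ha].
    + apply (taut_in x b); auto. tautac.
    + apply (mc_neg a M) in ha. apply (taut_in x (Neg a)); auto. tautac.
Qed.

Lemma mc_iff {P Ag} {p0 : P} {x : fset P Ag} a b : maxConsistent p0 x -> x (Iff a b) -> (x a <-> x b).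
Proof.
  intros M h. apply (mc_and (Imp a b) (Imp b a) M) in h. destruct h as [h1 h2].
  rewrite (mc_imp _ _ M) in h1. rewrite (mc_imp _ _ M) in h2. tauto.
Qed.

Lemma mc_thm_iff {P Ag} {p0 : P} {x : fset P Ag} a b : maxConsistent p0 x -> Thm (Iff a b) -> (x a <-> x b).
Proof. intros M h. apply (mc_iff a b M). apply thm_in; auto. apply (mc_theory M). Qed.

Definition triple P Ag := (form P Ag * nform P Ag * form P Ag)%type.

Definition chi_of {P Ag} (p0 : P) (x : fset P Ag) (xi : nform P Ag) (c : form P Ag) : form P Ag :=
  epsilon (inhabits (Var p0)) (fun chi => isPAL chi /\ ~ plus x (Neg (fill xi (Ann chi c))) (Bot p0)).

Definition step {P Ag} (p0 : P) (x : fset P Ag) (tr : triple P Ag) : fset P Ag :=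
  let '(psi, xi, c) := tr in
  if excluded_middle_informative (~ plus x psi (Bot p0)) then plus x psi
  else if excluded_middle_informative
        (isPAL (chi_of p0 x xi c) /\ ~ plus x (Neg (fill xi (Ann (chi_of p0 x xi c) c))) (Bot p0))
  then plus x (Neg (fill xi (Ann (chi_of p0 x xi c) c)))
  else x.

Lemma step_props {P Ag} (p0 : P) (x : fset P Ag) tr :
  isTheory x -> ~ x (Bot p0) ->
  isTheory (step p0 x tr) /\ ~ step p0 x tr (Bot p0) /\ (forall a, x a -> step p0 x tr a).
Proof.
  intros T C. destruct tr as [[psi xi] c]. unfold step.
  destruct (excluded_middle_informative _) as [h|h].
  - split; [apply plus_theory; auto|split; auto]. intros; apply plus_incl; auto.
  - destruct (excluded_middle_informative _) as [h2|h2].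
    + split; [apply plus_theory; auto|split; [tauto|]]. intros; apply plus_incl; auto.
    + auto.
Qed.

Lemma step_psi {P Ag} (p0 : P) (x : fset P Ag) psi xi c :
  isTheory x -> ~ plus x psi (Bot p0) -> step p0 x (psi, xi, c) psi.
Proof.
  intros T h. unfold step. destruct (excluded_middle_informative _) as [h1|h1]; [|tauto].
  apply plus_self; auto.
Qed.

Lemma step_box {P Ag} (p0 : P) (x : fset P Ag) xi c :
  isTheory x -> ~ x (Bot p0) -> plus x (fill xi (Box c)) (Bot p0) ->
  exists chi, isPAL chi /\ step p0 x (fill xi (Box c), xi, c) (Neg (fill xi (Ann chi c))).
Proof.
  intros T C h. unfold step. destruct (excluded_middle_informative _) as [h1|h1]; [tauto|].
  assert (Ex : exists chi, isPAL chi /\ ~ plus x (Neg (fill xi (Ann chi c))) (Bot p0)).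
  { apply NNPP. intros N. apply C.
    assert (Hall : forall chi, isPAL chi -> x (fill xi (Ann chi c))).
    { intros chi hp. apply NNPP. intros N2. apply N. exists chi. split; auto.
      intros hb. apply N2. unfold plus in hb.
      apply (taut_in x (Imp (Neg (fill xi (Ann chi c))) (Bot p0))); auto. tautac. }
    destruct T as [T1 [T2 T3]]. pose proof (T3 xi c Hall) as hb.
    unfold plus in h. eapply T2; eauto. }
  pose proof (epsilon_spec (inhabits (Var p0)) _ Ex) as hs. fold (chi_of p0 x xi c) in hs.
  destruct (excluded_middle_informative _) as [h2|h2]; [|tauto].
  exists (chi_of p0 x xi c). split; [tauto|]. apply plus_self; auto.
Qed.

Fixpoint chain {P Ag} (p0 : P) (e : nat -> triple P Ag) (t : fset P Ag) (n : nat) : fset P Ag :=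
  match n with 0 => t | S n => step p0 (chain p0 e t n) (e n) end.

Lemma chain_props {P Ag} (p0 : P) e (t : fset P Ag) n :
  isTheory t -> ~ t (Bot p0) -> isTheory (chain p0 e t n) /\ ~ chain p0 e t n (Bot p0).
Proof.
  intros T C. induction n; simpl; auto.
  destruct IHn as [T' C']. destruct (step_props p0 _ (e n) T' C') as [a [b _]]. auto.
Qed.

Lemma chain_mono {P Ag} (p0 : P) e (t : fset P Ag) n m a :
  isTheory t -> ~ t (Bot p0) -> n <= m -> chain p0 e t n a -> chain p0 e t m a.
Proof.
  intros T C le. induction le; auto. intros h. simpl.
  destruct (chain_props p0 e _ m T C) as [T' C'].
  destruct (step_props p0 _ (e m) T' C') as [_ [_ hh]]. auto.
Qed.

Lemma lindenbaum {P Ag} (p0 : P) (e : nat -> triple P Ag) (He : forall tr, exists n, e n = tr)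
  (t : fset P Ag) : isTheory t -> ~ t (Bot p0) ->
  exists y, maxConsistent p0 y /\ forall a, t a -> y a.
Proof.
  intros T C. set (y := fun a => exists n, chain p0 e t n a).
  assert (Ty : isTheory y).
  { split; [|split].
    - intros a ha. exists 0. simpl. apply thm_in; auto.
    - intros a b [n hn] [m hm]. exists (max n m).
      destruct (chain_props p0 e _ (max n m) T C) as [T' _].
      apply (mp_in _ a b T').
      + apply (chain_mono p0 e t n (max n m) _ T C); [lia|exact hn].
      + apply (chain_mono p0 e t m (max n m) _ T C); [lia|exact hm].
    - intros xi c H. destruct (He (fill xi (Box c), xi, c)) as [n0 hn0].
      destruct (chain_props p0 e _ n0 T C) as [T0 C0].
      destruct (classic (plus (chain p0 e t n0) (fill xi (Box c)) (Bot p0))) as [hb|hb].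
      + destruct (step_box p0 _ xi c T0 C0 hb) as [chi [hp hs]].
        destruct (H chi hp) as [m hm]. exfalso.
        destruct (chain_props p0 e _ (max (S n0) m) T C) as [T' C'].
        apply C'. apply (taut2_in _ (Neg (fill xi (Ann chi c))) (fill xi (Ann chi c))); auto.
        * tautac.
        * apply (chain_mono p0 e t (S n0) _ _ T C); [lia|]. simpl. rewrite hn0. exact hs.
        * apply (chain_mono p0 e t m _ _ T C); [lia|exact hm].
      + exists (S n0). simpl. rewrite hn0. apply step_psi; auto. }
  exists y. split; [split; [split; [exact Ty|]|]|].
  - intros [n hn]. destruct (chain_props p0 e _ n T C) as [_ Cn]. auto.
  - intros SS HS [a [hSa hya]] [z [[Tz Cz] hz]].
    destruct (He (a, Hole, a)) as [n0 hn0].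
    destruct (chain_props p0 e _ n0 T C) as [T0 C0].
    destruct (classic (plus (chain p0 e t n0) a (Bot p0))) as [hb|hb].
    + apply Cz. apply (taut2_in z (Imp a (Bot p0)) a); auto; [tautac|].
      apply hz, HS. exists n0. exact hb.
    + apply hya. unfold y. exists (S n0). simpl. rewrite hn0. apply step_psi; auto.
  - intros a ha. exists 0. exact ha.
Qed.

Lemma to_nat_inj p q : to_nat p = to_nat q -> p = q.
Proof. intros h. rewrite <- (cancel_of_to p), <- (cancel_of_to q), h. reflexivity. Qed.

Definition pr (a b : nat) : nat := to_nat (a, b).
Lemma pr_inj a b c d : pr a b = pr c d -> a = c /\ b = d.
Proof. unfold pr. intros h. apply to_nat_inj in h. injection h. auto. Qed.
Lemma pr_pos a b : 0 < a -> 0 < pr a b.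
Proof. unfold pr. intros h. pose proof (to_nat_non_decreasing a b). lia. Qed.
Global Opaque pr.

Fixpoint cf {P Ag} (fP : P -> nat) (fA : Ag -> nat) (f : form P Ag) : nat :=
  match f with
  | Var p => pr 0 (fP p)
  | Neg a => pr 1 (cf fP fA a)
  | And a b => pr 2 (pr (cf fP fA a) (cf fP fA b))
  | K i a => pr 3 (pr (fA i) (cf fP fA a))
  | FInt a => pr 4 (cf fP fA a)
  | Ann a b => pr 5 (pr (cf fP fA a) (cf fP fA b))
  | Box a => pr 6 (cf fP fA a)
  end.

Ltac injnat := repeat match goal with
  | H : pr _ _ = pr _ _ |- _ => apply pr_inj in H; destruct H
  | H : S _ = S _ |- _ => injection H; clear H; intros
  end.

Lemma cf_inj {P Ag} fP fA (HP : forall p q : P, fP p = fP q -> p = q)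
  (HA : forall i j : Ag, fA i = fA j -> i = j) :
  forall f g : form P Ag, cf fP fA f = cf fP fA g -> f = g.
Proof.
  induction f; destruct g; cbn [cf]; intros H; injnat; try discriminate;
  repeat match goal with
  | H : fP _ = fP _ |- _ => apply HP in H
  | H : fA _ = fA _ |- _ => apply HA in H
  | H : cf _ _ ?a = cf _ _ ?b, IH : forall g, cf _ _ ?a0 = cf _ _ g -> ?a0 = g |- _ =>
      unify a a0; apply IH in H
  end; subst; reflexivity.
Qed.

Fixpoint cn {P Ag} (fP : P -> nat) (fA : Ag -> nat) (xi : nform P Ag) : nat :=
  match xi with
  | Hole => 0
  | NImp a xi => pr 1 (pr (cf fP fA a) (cn fP fA xi))
  | NK i xi => pr 2 (pr (fA i) (cn fP fA xi))
  | NInt xi => pr 3 (cn fP fA xi)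
  | NAnn a xi => pr 4 (pr (cf fP fA a) (cn fP fA xi))
  end.

Lemma cn_inj {P Ag} fP fA (HP : forall p q : P, fP p = fP q -> p = q)
  (HA : forall i j : Ag, fA i = fA j -> i = j) :
  forall f g : nform P Ag, cn fP fA f = cn fP fA g -> f = g.
Proof.
  induction f; destruct g; cbn [cn]; intros H; injnat; try discriminate;
  try (exfalso; match type of H with
       | 0 = pr ?a ?b => pose proof (pr_pos a b ltac:(lia)); lia
       | pr ?a ?b = 0 => pose proof (pr_pos a b ltac:(lia)); lia end);
  repeat match goal with
  | H : fA _ = fA _ |- _ => apply HA in H
  | H : cf _ _ ?a = cf _ _ ?b |- _ => apply (cf_inj fP fA HP HA) in H
  | H : cn _ _ ?a = cn _ _ ?b, IH : forall g, cn _ _ ?a0 = cn _ _ g -> ?a0 = g |- _ =>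
      unify a a0; apply IH in H
  end; subst; reflexivity.
Qed.

Lemma enum_exists {P Ag} (p0 : P)
  (HPcount : exists f : P -> nat, forall p q, f p = f q -> p = q)
  (HAfin : exists l : list Ag, forall i, In i l) :
  exists e : nat -> triple P Ag, forall tr, exists n, e n = tr.
Proof.
  destruct HPcount as [fP HP]. destruct HAfin as [l Hl].
  set (fA := fun i : Ag => epsilon (inhabits 0) (fun n => nth_error l n = Some i)).
  assert (HfA : forall i, nth_error l (fA i) = Some i).
  { intros i. apply (epsilon_spec (inhabits 0) (fun n => nth_error l n = Some i)).
    apply In_nth_error. auto. }
  assert (HA : forall i j, fA i = fA j -> i = j).
  { intros i j h. pose proof (HfA i) as h1. rewrite h, HfA in h1. congruence. }
  set (ct := fun tr : triple P Ag => let '(a, xi, c) := tr in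
               pr (cf fP fA a) (pr (cn fP fA xi) (cf fP fA c))).
  assert (Hct : forall s t, ct s = ct t -> s = t).
  { intros [[a xi] c] [[a2 xi2] c2]; unfold ct; intros h; injnat.
    apply (cf_inj fP fA HP HA) in H1. apply (cf_inj fP fA HP HA) in H.
    apply (cn_inj fP fA HP HA) in H0. subst. reflexivity. }
  exists (fun n => epsilon (inhabits (Var p0, Hole, Var p0)) (fun tr => ct tr = n)).
  intros tr. exists (ct tr). apply Hct.
  apply (epsilon_spec (inhabits (Var p0, Hole, Var p0)) (fun t => ct t = ct tr)). eauto.
Qed.

Lemma op_theory {P Ag} (O : form P Ag -> form P Ag)
  (HN : forall a, Thm a -> Thm (O a))
  (HK : forall a b, Thm (Imp (O (Imp a b)) (Imp (O a) (O b))))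
  (HX : forall xi, exists xi', forall c, fill xi' c = O (fill xi c))
  (x : fset P Ag) : isTheory x -> isTheory (fun a => x (O a)).
Proof.
  intros T. split; [|split].
  - intros a h. apply thm_in; auto.
  - intros a b h1 h2. apply (taut2_in x (O (Imp a b)) (O a)); auto.
  - intros xi c H. destruct (HX xi) as [xi' E]. rewrite <- E.
    destruct T as [_ [_ D]]. apply D. intros psi hp. rewrite E. auto.
Qed.

Lemma op_exist {P Ag} (p0 : P) (e : nat -> triple P Ag) (He : forall tr, exists n, e n = tr)
  (O : form P Ag -> form P Ag)
  (HN : forall a, Thm a -> Thm (O a))
  (HK : forall a b, Thm (Imp (O (Imp a b)) (Imp (O a) (O b))))
  (HX : forall xi, exists xi', forall c, fill xi' c = O (fill xi c))
  (x : fset P Ag) a : maxConsistent p0 x -> ~ x (O a) ->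
  exists y, maxConsistent p0 y /\ (forall b, x (O b) -> y b) /\ ~ y a.
Proof.
  intros M h. pose proof (mc_theory M) as T.
  pose proof (op_theory O HN HK HX x T) as Tt.
  set (t := fun b => x (O b)) in *.
  assert (Ct : ~ plus t (Neg a) (Bot p0)).
  { intros hb. apply h. unfold plus, t in hb.
    apply (taut_in x (O (Imp (Neg a) (Bot p0)))); auto.
    eapply R_MP; [apply HK|]. apply HN. tautac. }
  destruct (lindenbaum p0 e He (plus t (Neg a)) (plus_theory _ _ Tt) Ct) as [y [My Hy]].
  exists y. split; auto. split.
  - intros b hb. apply Hy. apply plus_incl; auto.
  - intros ha. apply (mc_neg a My); auto. apply Hy. apply plus_self; auto.
Qed.

Lemma K_truth {P Ag} (p0 : P) (e : nat -> triple P Ag) (He : forall tr, exists n, e n = tr)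
  (x : Xc Ag p0) i a : mem x (K i a) <-> forall y : Xc Ag p0, simc i x y -> mem y a.
Proof.
  destruct x as [x M]. unfold mem; simpl. pose proof (mc_theory M) as T. split.
  - intros h [y My] hs. unfold simc, mem in hs; simpl in hs. simpl.
    apply hs in h. apply (taut_in y (K i a)); auto. apply (mc_theory My). apply Ax_KT.
  - intros H. apply NNPP. intros N.
    destruct (op_exist p0 e He (K i) (R_NecK i) (Ax_KK i)
               (fun xi => ex_intro (fun xi2 => forall c, fill xi2 c = K i (fill xi c)) (NK i xi) (fun c => eq_refl)) x a M N) as [y [My [H1 H2]]].
    apply H2. apply (H (exist _ y My)). unfold simc, mem; simpl. intros b. split.
    + intros hb. apply (H1 (K i b)). apply (taut_in x (K i b)); auto. apply Ax_K4.
    + intros hb. apply NNPP. intros nb. apply (mc_neg _ M) in nb.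
      apply (taut_in x (Neg (K i b)) (K i (Neg (K i b)))) in nb; auto; [|apply Ax_K5].
      apply H1 in nb. apply (mc_neg _ My) in nb. auto.
Qed.



Lemma interior_sub {P Ag} {p0 : P} (A : Xc Ag p0 -> Prop) y : interior A y -> A y.
Proof. intros [U [_ [h1 h2]]]. auto. Qed.

Lemma interior_mono {P Ag} {p0 : P} (A B : Xc Ag p0 -> Prop) y :
  (forall z, A z -> B z) -> interior A y -> interior B y.
Proof. intros H [U [h0 [h1 h2]]]. exists U. auto. Qed.

Lemma interior_open {P Ag} {p0 : P} (A : Xc Ag p0 -> Prop) : isOpen (interior A).
Proof.
  intros y [U [hU [hy hA]]]. destruct (hU y hy) as [l [l1 l2]].
  exists l. split; auto. intros z hz. exists U. auto.
Qed.

Lemma open_interior {P Ag} {p0 : P} (A : Xc Ag p0 -> Prop) y : isOpen A -> A y -> interior A y.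
Proof. intros h1 h2. exists A. auto. Qed.

Lemma open_inter {P Ag} {p0 : P} (A B : Xc Ag p0 -> Prop) :
  isOpen A -> isOpen B -> isOpen (fun y => A y /\ B y).
Proof.
  intros hA hB y [ya yb]. destruct (hA y ya) as [l [l1 l2]]. destruct (hB y yb) as [m [m1 m2]].
  exists (l ++ m). split.
  - intros s hs. apply in_app_or in hs. destruct hs; auto.
  - intros z hz. split; [apply l2|apply m2]; intros s hs; apply hz; apply in_or_app; auto.
Qed.

Lemma FInt_truth {P Ag} (p0 : P) (e : nat -> triple P Ag) (He : forall tr, exists n, e n = tr)
  (HAne : inhabited Ag) (x : Xc Ag p0) a :
  mem x (FInt a) <-> interior (fun y => mem y a) x.
Proof.
  split.
  - intros h. destruct HAne as [i0].
    exists (subbase (x, a, i0)). split; [|split].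
    + intros y hy. exists [(x, a, i0)]. split.
      * intros s [<-|[]]. exact hy.
      * intros z hz. apply hz. left; reflexivity.
    + simpl. split; auto. intros b; tauto.
    + intros z [_ hz]. destruct z as [z Mz]. unfold mem in *; simpl in *.
      apply (taut_in z (FInt a)); auto. apply (mc_theory Mz). apply Ax_IntT.
  - intros [V [hV [hx hVa]]]. destruct (hV x hx) as [l [l1 l2]].
    destruct x as [x M]. unfold mem; simpl. pose proof (mc_theory M) as T.
    apply NNPP. intros N.
    destruct (op_exist p0 e He FInt (@R_NecInt P Ag) (@Ax_IntK P Ag)
      (fun xi => ex_intro (fun xi2 => forall c, fill xi2 c = FInt (fill xi c)) (NInt xi) (fun c => eq_refl))
      x a M N) as [y [My [H1 H2]]].
    apply H2. apply (hVa (exist _ y My)). apply l2. intros [[z b] i] hs.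
    specialize (l1 _ hs). simpl in l1 |- *. destruct l1 as [hc hb]. split.
    + unfold cls, simc in *. intros c. rewrite hc. unfold mem; simpl. split.
      * intros hk. apply H1. apply (taut_in x (K i (K i c))); auto; [apply Ax_KInt|].
        apply (taut_in x (K i c)); auto. apply Ax_K4.
      * intros hk. apply NNPP. intros nk. apply (mc_neg _ M) in nk.
        apply (taut_in x (Neg (K i c)) (K i (Neg (K i c)))) in nk; auto; [|apply Ax_K5].
        apply (taut_in x _ (FInt (Neg (K i c)))) in nk; auto; [|apply Ax_KInt].
        apply H1 in nk. apply (mc_neg _ My) in nk. auto.
    + unfold mem in *; simpl in *. apply H1. apply (taut_in x (FInt b)); auto. apply Ax_Int4.
Qed.

Lemma mc_ax_iff {P Ag} {p0 : P} {x : fset P Ag} a b : maxConsistent p0 x -> Thm (Iff a b) -> (x a <-> x b).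
Proof. intros M h. exact (mc_thm_iff a b M h). Qed.

Lemma ann_var {P Ag} {p0 : P} {x : fset P Ag} a p : maxConsistent p0 x ->
  (x (Ann a (Var p)) <-> (x (FInt a) -> x (Var p))).
Proof. intros M. rewrite (mc_ax_iff _ _ M (Ax_Rp a p)). apply (mc_imp _ _ M). Qed.

Lemma ann_neg {P Ag} {p0 : P} {x : fset P Ag} a b : maxConsistent p0 x ->
  (x (Ann a (Neg b)) <-> (x (FInt a) -> ~ x (Ann a b))).
Proof. intros M. rewrite (mc_ax_iff _ _ M (Ax_Rneg a b)), (mc_imp _ _ M), (mc_neg _ M). tauto. Qed.

Lemma ann_and {P Ag} {p0 : P} {x : fset P Ag} a b c : maxConsistent p0 x ->
  (x (Ann a (And b c)) <-> (x (Ann a b) /\ x (Ann a c))).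
Proof. intros M. rewrite (mc_ax_iff _ _ M (Ax_Rand a b c)), (mc_and _ _ M). tauto. Qed.

Lemma ann_K {P Ag} {p0 : P} {x : fset P Ag} a i b : maxConsistent p0 x ->
  (x (Ann a (K i b)) <-> (x (FInt a) -> x (K i (Ann a b)))).
Proof. intros M. rewrite (mc_ax_iff _ _ M (Ax_RK a i b)), (mc_imp _ _ M). tauto. Qed.

Lemma ann_int {P Ag} {p0 : P} {x : fset P Ag} a b : maxConsistent p0 x ->
  (x (Ann a (FInt b)) <-> (x (FInt a) -> x (FInt (Ann a b)))).
Proof. intros M. rewrite (mc_ax_iff _ _ M (Ax_Rint a b)), (mc_imp _ _ M). tauto. Qed.

Lemma ann_ann {P Ag} {p0 : P} {x : fset P Ag} a b c : maxConsistent p0 x ->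
  (x (Ann a (Ann b c)) <-> x (Ann (Neg (Ann a (Neg (FInt b)))) c)).
Proof. intros M. exact (mc_ax_iff _ _ M (Ax_Rann a b c)). Qed.

Lemma ann_vacuous {P Ag} {p0 : P} {x : fset P Ag} : maxConsistent p0 x ->
  forall b a, ~ x (FInt a) -> x (Ann a b).
Proof.
  intros M. pose proof (mc_theory M) as T.
  induction b; intros a0 h.
  - apply (ann_var _ _ M). tauto.
  - apply (ann_neg _ _ M). tauto.
  - apply (ann_and _ _ _ M). auto.
  - apply (ann_K _ _ _ M). tauto.
  - apply (ann_int _ _ M). tauto.
  - apply (ann_ann _ _ _ M). apply IHb2. intros hi.
    apply (taut_in x _ _ T (Ax_IntT _)) in hi. apply (mc_neg _ M) in hi. apply hi.
    apply (ann_neg _ _ M). tauto.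
  - destruct T as [_ [_ D]]. apply (D (NAnn a0 Hole) b). intros psi hp. simpl.
    apply (ann_ann _ _ _ M). apply IHb. intros hi.
    apply (taut_in x _ _ (mc_theory M) (Ax_IntT _)) in hi. apply (mc_neg _ M) in hi. apply hi.
    apply (ann_neg _ _ M). tauto.
Qed.

Lemma ann_mp {P Ag} {p0 : P} {x : fset P Ag} a b c : maxConsistent p0 x ->
  x (Ann a (Imp b c)) -> x (Ann a b) -> x (Ann a c).
Proof.
  intros M h1 h2. destruct (classic (x (FInt a))) as [hi|hi]; [|apply (ann_vacuous M); auto].
  unfold Imp in h1. rewrite (ann_neg _ _ M), (ann_and _ _ _ M), (ann_neg _ _ M) in h1.
  apply NNPP. intros N. apply h1; auto.
Qed.

Lemma ann_box {P Ag} {p0 : P} {x : fset P Ag} a c : maxConsistent p0 x ->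
  (x (Ann a (Box c)) <-> forall chi, isPAL chi -> x (Ann a (Ann chi c))).
Proof.
  intros M. pose proof (mc_theory M) as T. split.
  - intros h chi hp. apply (ann_mp _ (Box c) _ M); auto.
    apply thm_in; auto. apply R_NecAnn. apply Ax_Box; auto.
  - intros H. destruct T as [_ [_ D]]. apply (D (NAnn a Hole) c). exact H.
Qed.

Lemma box_syn {P Ag} {p0 : P} {x : fset P Ag} c : maxConsistent p0 x ->
  (x (Box c) <-> forall chi, isPAL chi -> x (Ann chi c)).
Proof.
  intros M. pose proof (mc_theory M) as T. split.
  - intros h chi hp. apply (taut_in x (Box c)); auto. apply Ax_Box; auto.
  - intros H. destruct T as [_ [_ D]]. apply (D Hole c). exact H.
Qed.

Fixpoint nb {P Ag} (f : form P Ag) : nat :=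
  match f with
  | Var _ => 0 | Neg a => nb a | And a b => nb a + nb b | K _ a => nb a
  | FInt a => nb a | Ann a b => nb a + nb b | Box a => S (nb a)
  end.
Fixpoint cx {P Ag} (f : form P Ag) : nat :=
  match f with
  | Var _ => 1 | Neg a => S (cx a) | And a b => S (cx a + cx b) | K _ a => S (cx a)
  | FInt a => S (cx a) | Ann a b => (4 + cx a) * cx b | Box a => S (cx a)
  end.
Lemma cx_pos {P Ag} (f : form P Ag) : 1 <= cx f.
Proof. induction f; simpl; nia. Qed.
Lemma nb_PAL {P Ag} (f : form P Ag) : isPAL f -> nb f = 0.
Proof. induction f; simpl; intuition; lia. Qed.

Lemma lex_ind (A : Type) (m1 m2 : A -> nat) (Q : A -> Prop) :
  (forall f, (forall g, m1 g < m1 f \/ (m1 g <= m1 f /\ m2 g < m2 f) -> Q g) -> Q f) ->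
  forall f, Q f.
Proof.
  intros H.
  assert (Hn : forall N M f, m1 f <= N -> m2 f <= M -> Q f).
  { induction N; induction M; intros f h1 h2; apply H; intros g [hg|[hg1 hg2]];
      try lia.
    - apply (IHM g); lia.
    - apply (IHN (m2 g)); lia.
    - apply (IHN (m2 g)); lia.
    - apply (IHM g); lia. }
  intros f. apply (Hn (m1 f) (m2 f)); lia.
Qed.

Lemma pred_ext {X : Type} (A B : X -> Prop) : (forall y, A y <-> B y) -> A = B.
Proof. intros h. apply functional_extensionality. intros y. apply propositional_extensionality. auto. Qed.

Lemma interior_idem {P Ag} {p0 : P} (A : Xc Ag p0 -> Prop) : interior (interior A) = interior A.
Proof. apply pred_ext. intros y; split; [apply interior_sub|]. intros h. apply open_interior; auto. apply interior_open. Qed.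

Lemma sem_annann {P Ag} {p0 : P} (a c d : form P Ag) (x : Xc Ag p0) :
  sat (Ann (Neg (Ann a (Neg (FInt c)))) d) (fun _ => True) x <->
  sat (Ann a (Ann c d)) (fun _ => True) x.
Proof.
  cbn [sat].
  set (I := interior (fun y => True /\ sat a (fun _ => True) y)).
  set (W := fun y => True /\ I y).
  set (J := interior (fun y => W y /\ sat c W y)).
  change (interior (fun y0 => (True /\ I y0) /\ sat c W y0)) with J.
  assert (HJI : forall y, J y -> I y).
  { intros y hy. apply interior_sub in hy. destruct hy as [[_ h] _]. exact h. }
  assert (E1 : (fun z => True /\ ~ (I z -> ~ J z)) = J).
  { apply pred_ext. intros y. split; [intros [_ h]; apply NNPP; intros n; apply h; auto|].
    intros h; split; auto. }
  rewrite E1. unfold J at 1 2. rewrite interior_idem. fold J.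
  assert (E3 : (fun y => True /\ J y) = J) by (apply pred_ext; tauto).
  assert (E4 : (fun y => (True /\ I y) /\ J y) = J) by (apply pred_ext; intros y; split; [tauto|]; intros h; split; auto).
  rewrite E3, E4. split; auto.
Qed.

Lemma sem_annint {P Ag} {p0 : P} (I S : Xc Ag p0 -> Prop) x :
  isOpen I -> I x ->
  (interior (fun y => I y -> S y) x <-> interior (fun y => (True /\ I y) /\ S y) x).
Proof.
  intros hI hx. split.
  - intros [V [hV [hVx hVS]]]. exists (fun y => V y /\ I y). split; [apply open_inter; auto|].
    split; auto. intros z [h1 h2]. auto.
  - apply interior_mono. tauto.
Qed.

Theorem truth {P Ag} (p0 : P) (e : nat -> triple P Ag) (He : forall tr, exists n, e n = tr)
  (HAne : inhabited Ag) :
  forall (f : form P Ag) (x : Xc Ag p0), mem x f <-> sat f (fun _ : Xc Ag p0 => True) x.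
Proof.
  apply (lex_ind _ nb cx (fun f => forall x : Xc Ag p0, mem x f <-> sat f (fun _ : Xc Ag p0 => True) x)).
  intros f IH. pose proof (@cx_pos P Ag) as CP.
  destruct f as [p|a|a b|i a|a|a b|c]; intros x.
  - simpl. tauto.
  - cbn [sat]. rewrite <- (IH a) by (simpl; lia). unfold mem. apply (mc_neg a (proj2_sig x)).
  - cbn [sat]. rewrite <- (IH a) by (simpl; lia). rewrite <- (IH b) by (simpl; lia).
    unfold mem. apply (mc_and a b (proj2_sig x)).
  - cbn [sat]. rewrite (K_truth p0 e He). unfold cls.
    split; intros h y; [intros [hy _]|intros hy]; [apply IH|]; try (simpl; lia); auto.
    apply (IH a); [simpl; lia|]. auto.
  - cbn [sat]. rewrite (FInt_truth p0 e He HAne).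
    assert (E : (fun y : Xc Ag p0 => mem y a) = (fun y => True /\ sat a (fun _ : Xc Ag p0 => True) y)).
    { apply pred_ext. intros y. rewrite (IH a) by (simpl; lia). tauto. }
    rewrite E. tauto.
  -
    assert (IHI : forall y : Xc Ag p0, mem y (FInt a) <-> sat (FInt a) (fun _ : Xc Ag p0 => True) y).
    { apply IH. right. split; [simpl; lia|]. simpl. specialize (CP b). nia. }
    destruct b as [p|c|c d|i c|c|c d|c].
    + unfold mem. rewrite (ann_var _ _ (proj2_sig x)). fold (mem x (FInt a)).
      rewrite (IHI x). cbn [sat]. tauto.
    + unfold mem. rewrite (ann_neg _ _ (proj2_sig x)). fold (mem x (FInt a)). fold (mem x (Ann a c)).
      rewrite (IHI x). rewrite (IH (Ann a c)) by (right; simpl; split; [lia|nia]).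
      cbn [sat]. tauto.
    + unfold mem. rewrite (ann_and _ _ _ (proj2_sig x)). fold (mem x (Ann a c)). fold (mem x (Ann a d)).
      rewrite (IH (Ann a c)) by (right; simpl; split; [lia|nia]).
      rewrite (IH (Ann a d)) by (right; simpl; split; [lia|nia]).
      cbn [sat]. tauto.
    + unfold mem. rewrite (ann_K _ _ _ (proj2_sig x)). fold (mem x (FInt a)). fold (mem x (K i (Ann a c))).
      rewrite (IHI x). rewrite (K_truth p0 e He).
      assert (E : forall y : Xc Ag p0, mem y (Ann a c) <-> sat (Ann a c) (fun _ : Xc Ag p0 => True) y)
        by (apply IH; right; simpl; split; [lia|nia]).
      cbn [sat] in *. unfold cls. split.
      * intros h hI y [hs [_ hy]]. apply E; auto.
      * intros h hI y hs. apply E. intros hy. apply h; auto.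
    + unfold mem. rewrite (ann_int _ _ (proj2_sig x)). fold (mem x (FInt a)). fold (mem x (FInt (Ann a c))).
      rewrite (IHI x). rewrite (FInt_truth p0 e He HAne).
      assert (E : (fun y : Xc Ag p0 => mem y (Ann a c)) = (fun y => sat (Ann a c) (fun _ : Xc Ag p0 => True) y)).
      { apply pred_ext. intros y. apply IH; right; simpl; split; [lia|nia]. }
      rewrite E. cbn [sat]. split; intros h hI; specialize (h hI);
        (apply (sem_annint _ _ _ (interior_open _) hI); exact h) || (apply <- (sem_annint _ _ _ (interior_open _) hI); exact h).
    + unfold mem. rewrite (ann_ann _ _ _ (proj2_sig x)). fold (mem x (Ann (Neg (Ann a (Neg (FInt c)))) d)).
      rewrite (IH (Ann (Neg (Ann a (Neg (FInt c)))) d)).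
      * apply sem_annann.
      * right. simpl. split; [lia|]. pose proof (CP a). pose proof (CP c). pose proof (CP d). nia.
    + unfold mem. rewrite (ann_box _ _ (proj2_sig x)).
      assert (E : forall chi, isPAL chi -> (proj1_sig x (Ann a (Ann chi c)) <-> sat (Ann a (Ann chi c)) (fun _ : Xc Ag p0 => True) x)).
      { intros chi hp. apply (IH (Ann a (Ann chi c))). left. simpl. rewrite (nb_PAL chi hp). lia. }
      cbn [sat] in E |- *. split.
      * intros h hI psi hp. rewrite (sat0_sat_PAL psi hp). apply E; auto.
      * intros h psi hp. apply E; auto. intros hI. specialize (h hI psi hp).
        rewrite (sat0_sat_PAL psi hp) in h. exact h.
  - unfold mem. rewrite (box_syn _ (proj2_sig x)).
    assert (E : forall chi, isPAL chi -> (proj1_sig x (Ann chi c) <-> sat (Ann chi c) (fun _ : Xc Ag p0 => True) x)).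
    { intros chi hp. apply (IH (Ann chi c)). left. simpl. rewrite (nb_PAL chi hp). lia. }
    cbn [sat] in E |- *. split.
    + intros h psi hp. rewrite (sat0_sat_PAL psi hp). apply E; auto.
    + intros h psi hp. apply E; auto. specialize (h psi hp). rewrite (sat0_sat_PAL psi hp) in h. exact h.
Qed.

Theorem mainTheorem16 (P Ag : Type)
  (HPcount : exists f : P -> nat, forall p q, f p = f q -> p = q)
  (HAfin : exists l : list Ag, forall i, In i l)
  (HAne : inhabited Ag)
  (p0 : P) :
  forall (phi : form P Ag) (x : @Xc P Ag p0),
    mem x phi <-> sat phi (fun _ : @Xc P Ag p0 => True) x.
Proof.
  intros phi x. destruct (enum_exists p0 HPcount HAfin) as [e He].
  apply (truth p0 e He HAne).
Qed.
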